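(* Each of the logics $\mathbf T$, $\mathbf{KTB}$, $\mathbf{S4}$, $\mathbf{S5}$, $\mathbf{S4.2}$, $\mathbf{S4.3}$ has the strong boxdot property. That is, for each such logic $L_0$ and every normal modal logic $L$, if $\mathrm{BD}(L)\subseteq L_0$ then $L\subseteq L_0$. In particular (the boxdot conjecture), for every normal modal logic $L$: if $\mathrm{BD}(L)=\mathbf T$ then $L\subseteq\mathbf T$.
   Context: Modal formulas are built from propositional variables with Boolean connectives and a single modality $\Box$, with $\Diamond=\neg\Box\neg$. A normal modal logic (nml) contains all tautologies and $\Box(p\to q)\to(\Box p\to\Box q)$, and is closed under modus ponens, necessitation and substitution. $\mathbf K$ is the least nml, and $L\oplus\alpha$ denotes the least nml containing $L\cup\{\alpha\}$. The logics are: - $\mathbf T=\mathbf K\oplus(\Box p\to p)$; - $\mathbf{KTB}=\mathbf T\oplus(p\to\Box\Diamond p)$; - $\mathbf{S4}=\mathbf T\oplus(\Box p\to\Box\Box p)$; - $\mathbf{S5}=\mathbf{S4}\oplus(p\to\Box\Diamond p)$; - $\mathbf{S4.2}=\mathbf{S4}\oplus(\Diamond\Box p\to\Box\Diamond p)$; - $\mathbf{S4.3}=\mathbf{S4}\oplus(\Box(\Box p\to q)\vee\Box(\Box q\to p))$. The boxdot translation $\varphi\mapsto\varphi^{\boxdot}$ fixes propositional variables, commutes with Boolean connectives, and satisfies $(\Box\varphi)^{\boxdot}=\varphi^{\boxdot}\wedge\Box\varphi^{\boxdot}$. For an nml $L$, $\mathrm{BD}(L)=\{\varphi:\varphi^{\boxdot}\in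 L\}$. *)

(* Defs.v *)
From Stdlib Require Import Bool.

Inductive form : Type :=
| Var : nat -> form
| Bot : form
| Neg : form -> form
| And : form -> form -> form
| Or  : form -> form -> form
| Imp : form -> form -> form
| Box : form -> form.

Definition Dia (a : form) : form := Neg (Box (Neg a)).

Fixpoint teval (f : form -> bool) (a : form) : bool :=
  match a with
  | Var _ => f a
  | Bot => false
  | Neg b => negb (teval f b)
  | And b c => teval f b && teval f c
  | Or b c => teval f b || teval f c
  | Imp b c => implb (teval f b) (teval f c)
  | Box _ => f a
  end.

Definition tautology (a : form) : Prop := forall f, teval f a = true.

Fixpoint subst (s : nat -> form) (a : form) : form :=
  match a with
  | Var n => s n
  | Bot => Bot
  | Neg b => Neg (subst s b)
  | And b c => And (subst s b) (subst s c)
  | Or b c => Or (subst s b) (subst s c)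
  | Imp b c => Imp (subst s b) (subst s c)
  | Box b => Box (subst s b)
  end.

Definition p : form := Var 0.
Definition q : form := Var 1.

Definition axK : form := Imp (Box (Imp p q)) (Imp (Box p) (Box q)).

Definition logic := form -> Prop.

Record NML (L : logic) : Prop := {
  nml_taut : forall a, tautology a -> L a;
  nml_K : L axK;
  nml_MP : forall a b, L a -> L (Imp a b) -> L b;
  nml_Nec : forall a, L a -> L (Box a);
  nml_Subst : forall s a, L a -> L (subst s a)
}.

Inductive Ext (G : logic) : logic :=
| ext_taut : forall a, tautology a -> Ext G a
| ext_K : Ext G axK
| ext_hyp : forall a, G a -> Ext G a
| ext_MP : forall a b, Ext G a -> Ext G (Imp a b) -> Ext G b
| ext_Nec : forall a, Ext G a -> Ext G (Box a)
| ext_Subst : forall s a, Ext G a -> Ext G (subst s a).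

Definition K : logic := Ext (fun _ => False).
Definition oplus (L : logic) (alpha : form) : logic :=
  Ext (fun a => L a \/ a = alpha).

Definition LT    : logic := oplus K (Imp (Box p) p).
Definition LKTB  : logic := oplus LT (Imp p (Box (Dia p))).
Definition LS4   : logic := oplus LT (Imp (Box p) (Box (Box p))).
Definition LS5   : logic := oplus LS4 (Imp p (Box (Dia p))).
Definition LS4_2 : logic := oplus LS4 (Imp (Dia (Box p)) (Box (Dia p))).
Definition LS4_3 : logic :=
  oplus LS4 (Or (Box (Imp (Box p) q)) (Box (Imp (Box q) p))).

Fixpoint boxdot (a : form) : form :=
  match a with
  | Var n => Var n
  | Bot => Bot
  | Neg b => Neg (boxdot b)
  | And b c => And (boxdot b) (boxdot c)
  | Or b c => Or (boxdot b) (boxdot c)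
  | Imp b c => Imp (boxdot b) (boxdot c)
  | Box b => And (boxdot b) (Box (boxdot b))
  end.

Definition BD (L : logic) : logic := fun a => L (boxdot a).

Definition subset (A B : logic) : Prop := forall a, A a -> B a.

Definition strong_boxdot (L0 : logic) : Prop :=
  forall L : logic, NML L -> subset (BD L) L0 -> subset L L0.

(* Main.v *)
Require Import Defs.
From Stdlib Require Import Bool List Arith Lia.
Import ListNotations.

Notation Top := (Neg Bot).
Notation Iff a b := (And (Imp a b) (Imp b a)).

Ltac taut := let f := fresh "f" in intro f; simpl;
  repeat match goal with
  | |- context [teval f ?x] => destruct (teval f x)
  | |- context [f ?x] => destruct (f x)
  end; reflexivity.

Lemma mpt L (HL : NML L) a b : L a -> tautology (Imp a b) -> L b.
Proof. intros Ha Ht. eapply nml_MP; [exact HL|exact Ha|]. apply nml_taut; auto. Qed.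

Lemma andI L (HL : NML L) a b : L a -> L b -> L (And a b).
Proof.
  intros Ha Hb. eapply nml_MP; [exact HL|exact Hb|].
  eapply nml_MP; [exact HL|exact Ha|]. apply nml_taut; [exact HL|]. taut.
Qed.

Lemma kdist L (HL : NML L) a b : L (Imp (Box (Imp a b)) (Imp (Box a) (Box b))).
Proof.
  pose (s := fun n => match n with 0 => a | _ => b end).
  pose proof (nml_Subst _ HL s axK (nml_K _ HL)) as H.
  unfold axK, p, q in H. simpl in H. exact H.
Qed.

Lemma mono L (HL : NML L) a b : L (Imp a b) -> L (Imp (Box a) (Box b)).
Proof.
  intro H. apply (nml_MP _ HL (Box (Imp a b))); [apply nml_Nec; [exact HL|exact H]|].
  apply kdist; auto.
Qed.

Lemma imp_trans L (HL : NML L) a b c : L (Imp a b) -> L (Imp b c) -> L (Imp a c).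
Proof. intros H1 H2. pose proof (andI _ HL _ _ H1 H2) as hc. eapply mpt; [exact HL|exact hc|]. taut. Qed.

Lemma box_iff L (HL : NML L) a b : L (Imp (Box (Iff a b)) (Iff (Box a) (Box b))).
Proof.
  assert (h1 : L (Imp (Box (Iff a b)) (Box (Imp a b)))) by (apply mono; auto; apply nml_taut; auto; taut).
  assert (h2 : L (Imp (Box (Iff a b)) (Box (Imp b a)))) by (apply mono; auto; apply nml_taut; auto; taut).
  pose proof (kdist L HL a b). pose proof (kdist L HL b a).
  pose proof (andI _ HL _ _ h1 (andI _ HL _ _ h2 (andI _ HL _ _ H H0))) as hc.
  eapply mpt; [exact HL|exact hc|]. taut.
Qed.

Fixpoint md a := match a with
 | Var _ | Bot => 0 | Neg x => md x
 | And x y | Or x y | Imp x y => max (md x) (md y) | Box x => S (md x) end.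

Fixpoint subs a : list form := a :: match a with
 | Var _ | Bot => [] | Neg x => subs x
 | And x y | Or x y | Imp x y => subs x ++ subs y | Box x => subs x end.

Definition th r g := And (Imp (And (Var r) (Neg g)) (Neg (Box (Neg (And (Neg (Var r)) (Neg g))))))
  (Imp (And (Neg (Var r)) (Neg g)) (Neg (Box (Neg (And (Var r) (Neg g)))))).

Fixpoint Theta r (S : list form) := match S with [] => Top | g :: S' => And (th r g) (Theta r S') end.
Fixpoint boxn n a := match n with 0 => a | S n => Box (boxn n a) end.

Lemma D_base L (HL : NML L) r S n : L (Imp (boxdot (boxn n (Theta r S))) (boxdot (Theta r S))).
Proof.
  induction n; simpl. apply nml_taut; auto; taut.
  eapply imp_trans; [exact HL| |exact IHn]. apply nml_taut; auto; taut.
Qed.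

Lemma Theta_th L (HL : NML L) r S g : In g S -> L (Imp (boxdot (Theta r S)) (boxdot (th r g))).
Proof.
  induction S as [|h S IH]; simpl; [tauto|]. intros [->|H].
  - apply nml_taut; auto. unfold th. taut.
  - eapply imp_trans; [exact HL| |exact (IH H)]. apply nml_taut; auto; taut.
Qed.

Lemma in_subs c : In c (subs c).
Proof. destruct c; simpl; auto. Qed.

Lemma bd_equiv L (HL : NML L) r Sl : forall c, incl (subs c) Sl -> forall n, md c <= n ->
  L (Imp (boxdot (boxn n (Theta r Sl))) (Iff (boxdot c) c)).
Proof.
  induction c as [v| |c IHc|c1 IHc1 c2 IHc2|c1 IHc1 c2 IHc2|c1 IHc1 c2 IHc2|c IHc]; intros Hinc n Hn; simpl in Hinc, Hn.
  - apply nml_taut; auto; taut.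
  - apply nml_taut; auto; taut.
  - pose proof (IHc (proj2 (incl_cons_inv Hinc)) n Hn).
    eapply mpt; [exact HL|exact H|]. taut.
  - apply incl_cons_inv in Hinc as [_ Hinc]. apply incl_app_inv in Hinc as [H1 H2].
    pose proof (IHc1 H1 n ltac:(lia)). pose proof (IHc2 H2 n ltac:(lia)).
    pose proof (andI _ HL _ _ H H0) as hc. eapply mpt; [exact HL|exact hc|]. taut.
  - apply incl_cons_inv in Hinc as [_ Hinc]. apply incl_app_inv in Hinc as [H1 H2].
    pose proof (IHc1 H1 n ltac:(lia)). pose proof (IHc2 H2 n ltac:(lia)).
    pose proof (andI _ HL _ _ H H0) as hc. eapply mpt; [exact HL|exact hc|]. taut.
  - apply incl_cons_inv in Hinc as [_ Hinc]. apply incl_app_inv in Hinc as [H1 H2].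
    pose proof (IHc1 H1 n ltac:(lia)). pose proof (IHc2 H2 n ltac:(lia)).
    pose proof (andI _ HL _ _ H H0) as hc. eapply mpt; [exact HL|exact hc|]. taut.
  - destruct n as [|m]; [lia|].
    apply incl_cons_inv in Hinc as [_ Hinc].
    assert (Hg : In c Sl) by (apply Hinc; apply in_subs).
    pose proof (IHc Hinc m ltac:(lia)) as h1.
    pose proof (IHc Hinc (S m) ltac:(lia)) as h2.
    pose proof (mono L HL _ _ h1) as h3.
    pose proof (box_iff L HL (boxdot c) c) as h4.
    pose proof (imp_trans L HL _ _ _ (D_base L HL r Sl (S m)) (Theta_th L HL r Sl c Hg)) as h5.
    assert (h6 : L (Imp (Box (boxdot c)) (Box (Neg (And (Neg (Var r)) (Neg (boxdot c))))))).
    { apply mono; auto. apply nml_taut; auto; taut. }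
    assert (h7 : L (Imp (Box (boxdot c)) (Box (Neg (And (Var r) (Neg (boxdot c))))))).
    { apply mono; auto. apply nml_taut; auto; taut. }
    simpl in h2, h5 |- *.
    pose proof (andI _ HL _ _ h2 (andI _ HL _ _ h3 (andI _ HL _ _ h4 (andI _ HL _ _ h5 (andI _ HL _ _ h6 h7))))) as hc.
    eapply mpt; [exact HL|exact hc|].
    unfold th in *. taut.
Qed.

Fixpoint tr (r : nat) (b : bool) (a : form) : form :=
 match a with
 | Var n => if Nat.eqb n r then (if b then Top else Bot) else Var n
 | Bot => Bot
 | Neg x => Neg (tr r b x)
 | And x y => And (tr r b x) (tr r b y)
 | Or x y => Or (tr r b x) (tr r b y)
 | Imp x y => Imp (tr r b x) (tr r b y)
 | Box x => Box (And (tr r true x) (tr r false x))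
 end.

Lemma teval_tr r b f a : teval f (tr r b a) = teval (fun x => teval f (tr r b x)) a.
Proof. induction a; simpl; try rewrite IHa; try rewrite IHa1; try rewrite IHa2; reflexivity. Qed.

Lemma teval_subst s f a : teval f (subst s a) = teval (fun x => teval f (subst s x)) a.
Proof. induction a; simpl; try rewrite IHa; try rewrite IHa1; try rewrite IHa2; reflexivity. Qed.

Lemma taut_tr r b a : tautology a -> tautology (tr r b a).
Proof. intros H f. rewrite teval_tr. apply H. Qed.
Lemma taut_subst s a : tautology a -> tautology (subst s a).
Proof. intros H f. rewrite teval_subst. apply H. Qed.

Lemma subst_comp s t a : subst s (subst t a) = subst (fun n => subst s (t n)) a.
Proof. induction a; simpl; congruence. Qed.
Lemma subst_id a : subst Var a = a.
Proof. induction a; simpl; congruence. Qed.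

Lemma NML_Ext G : NML (Ext G).
Proof. constructor; [apply ext_taut|apply ext_K|apply ext_MP|apply ext_Nec|apply ext_Subst]. Qed.

Lemma kk L (HL : NML L) a0 a1 b0 b1 :
  L (Imp (Box (And (Imp a0 b0) (Imp a1 b1))) (Imp (Box (And a0 a1)) (Box (And b0 b1)))).
Proof.
  assert (h1 : L (Imp (Box (And (Imp a0 b0) (Imp a1 b1))) (Box (Imp (And a0 a1) (And b0 b1))))).
  { apply mono; auto. apply nml_taut; auto; taut. }
  pose proof (kdist L HL (And a0 a1) (And b0 b1)) as h2.
  pose proof (andI _ HL _ _ h1 h2) as hc. eapply mpt; [exact HL|exact hc|]. taut.
Qed.

Definition trc r (G L1 : logic) := forall a s b, G a -> L1 (tr r b (subst s a)).

Lemma ext_tr r G L1 (HL1 : NML L1) : trc r G L1 -> trc r (Ext G) L1.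
Proof.
  intros HG a s b H. revert s b. induction H; intros s0 b0.
  - apply nml_taut; auto. apply taut_tr, taut_subst; auto.
  - unfold axK, p, q; simpl. apply kk; auto.
  - apply HG; auto.
  - specialize (IHExt1 s0 b0). specialize (IHExt2 s0 b0). simpl in IHExt2.
    exact (nml_MP _ HL1 _ _ IHExt1 IHExt2).
  - simpl. apply nml_Nec; auto. apply andI; auto.
  - rewrite subst_comp. apply IHExt.
Qed.

Definition axT := Imp (Box p) p.
Definition ax4 := Imp (Box p) (Box (Box p)).
Definition axB := Imp p (Box (Dia p)).
Definition ax2 := Imp (Dia (Box p)) (Box (Dia p)).
Definition ax3 := Or (Box (Imp (Box p) q)) (Box (Imp (Box q) p)).

Lemma trT r L1 (HL : NML L1) (H : forall a, L1 (Imp (Box a) a)) s b : L1 (tr r b (subst s axT)).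
Proof.
  unfold axT, p; simpl. eapply imp_trans; [exact HL|apply H|].
  apply nml_taut; auto. destruct b; taut.
Qed.

Lemma tr4 r L1 (HL : NML L1) (H : forall a, L1 (Imp (Box a) (Box (Box a)))) s b : L1 (tr r b (subst s ax4)).
Proof.
  unfold ax4, p; simpl. eapply imp_trans; [exact HL|apply H|].
  apply mono; auto. apply nml_taut; auto. taut.
Qed.

Lemma trB r L1 (HL : NML L1) (H : forall a, L1 (Imp a (Box (Dia a)))) s b : L1 (tr r b (subst s axB)).
Proof.
  unfold axB, Dia, p in *; simpl.
  set (a0 := tr r true (s 0)). set (a1 := tr r false (s 0)).
  set (Q := Neg (Box (And (Neg a0) (Neg a1)))).
  assert (h1 : L1 (Imp (tr r b (s 0)) (Or a0 a1))) by (apply nml_taut; auto; destruct b; unfold a0, a1; taut).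
  pose proof (H (Or a0 a1)) as h2.
  assert (h3 : L1 (Imp (Neg (Box (Neg (Or a0 a1)))) Q)).
  { assert (L1 (Imp (Box (And (Neg a0) (Neg a1))) (Box (Neg (Or a0 a1))))).
    { apply mono; auto. apply nml_taut; auto; taut. }
    eapply mpt; [exact HL|exact H0|]. unfold Q. taut. }
  apply mono in h3; auto.
  assert (h5 : L1 (Imp (Box Q) (Box (And Q Q)))) by (apply mono; auto; apply nml_taut; auto; taut).
  eapply imp_trans; [exact HL|exact h1|]. eapply imp_trans; [exact HL|exact h2|].
  eapply imp_trans; [exact HL|exact h3|]. exact h5.
Qed.

Lemma tr2 r L1 (HL : NML L1) (H : forall a, L1 (Imp (Dia (Box a)) (Box (Dia a)))) s b : L1 (tr r b (subst s ax2)).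
Proof.
  unfold ax2, Dia, p in *; simpl.
  set (a0 := tr r true (s 0)). set (a1 := tr r false (s 0)).
  set (P := And a0 a1).
  set (Q := Neg (Box (And (Neg a0) (Neg a1)))).
  assert (h1 : L1 (Imp (Neg (Box (And (Neg (Box P)) (Neg (Box P))))) (Neg (Box (Neg (Box P)))))).
  { assert (L1 (Imp (Box (Neg (Box P))) (Box (And (Neg (Box P)) (Neg (Box P)))))).
    { apply mono; auto. apply nml_taut; auto; taut. }
    eapply mpt; [exact HL|exact H0|]. taut. }
  pose proof (H P) as h2.
  assert (h3 : L1 (Imp (Neg (Box (Neg P))) Q)).
  { assert (L1 (Imp (Box (And (Neg a0) (Neg a1))) (Box (Neg P)))).
    { apply mono; auto. apply nml_taut; auto; unfold P; taut. }
    eapply mpt; [exact HL|exact H0|]. unfold Q. taut. }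
  apply mono in h3; auto.
  assert (h5 : L1 (Imp (Box Q) (Box (And Q Q)))) by (apply mono; auto; apply nml_taut; auto; taut).
  eapply imp_trans; [exact HL|exact h1|]. eapply imp_trans; [exact HL|exact h2|].
  eapply imp_trans; [exact HL|exact h3|]. exact h5.
Qed.

Lemma tr3 r L1 (HL : NML L1) (H : forall a c, L1 (Or (Box (Imp (Box a) c)) (Box (Imp (Box c) a)))) s b :
  L1 (tr r b (subst s ax3)).
Proof.
  unfold ax3, p, q in *; simpl.
  set (a0 := tr r true (s 0)). set (a1 := tr r false (s 0)).
  set (b0 := tr r true (s 1)). set (b1 := tr r false (s 1)).
  pose proof (H (And a0 a1) (And b0 b1)) as h.
  assert (h1 : L1 (Imp (Box (Imp (Box (And a0 a1)) (And b0 b1)))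
     (Box (And (Imp (Box (And a0 a1)) b0) (Imp (Box (And a0 a1)) b1))))).
  { apply mono; auto. apply nml_taut; auto; taut. }
  assert (h2 : L1 (Imp (Box (Imp (Box (And b0 b1)) (And a0 a1)))
     (Box (And (Imp (Box (And b0 b1)) a0) (Imp (Box (And b0 b1)) a1))))).
  { apply mono; auto. apply nml_taut; auto; taut. }
  pose proof (andI _ HL _ _ h (andI _ HL _ _ h1 h2)) as hc.
  eapply mpt; [exact HL|exact hc|]. taut.
Qed.

Lemma cK r L1 (HL : NML L1) : trc r K L1.
Proof. apply ext_tr; auto. intros a s b []. Qed.

Lemma cT r L1 (HL : NML L1) (HT : forall a, L1 (Imp (Box a) a)) : trc r LT L1.
Proof. apply ext_tr; auto. intros a s b [H| ->]. apply cK; auto. apply trT; auto. Qed.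

Lemma cS4 r L1 (HL : NML L1) (HT : forall a, L1 (Imp (Box a) a))
  (H4 : forall a, L1 (Imp (Box a) (Box (Box a)))) : trc r LS4 L1.
Proof. apply ext_tr; auto. intros a s b [H| ->]. apply cT; auto. apply tr4; auto. Qed.

Lemma cKTB r L1 (HL : NML L1) (HT : forall a, L1 (Imp (Box a) a))
  (HB : forall a, L1 (Imp a (Box (Dia a)))) : trc r LKTB L1.
Proof. apply ext_tr; auto. intros a s b [H| ->]. apply cT; auto. apply trB; auto. Qed.

Lemma cS5 r L1 (HL : NML L1) (HT : forall a, L1 (Imp (Box a) a))
  (H4 : forall a, L1 (Imp (Box a) (Box (Box a))))
  (HB : forall a, L1 (Imp a (Box (Dia a)))) : trc r LS5 L1.
Proof. apply ext_tr; auto. intros a s b [H| ->]. apply cS4; auto. apply trB; auto. Qed.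

Lemma cS42 r L1 (HL : NML L1) (HT : forall a, L1 (Imp (Box a) a))
  (H4 : forall a, L1 (Imp (Box a) (Box (Box a))))
  (H2 : forall a, L1 (Imp (Dia (Box a)) (Box (Dia a)))) : trc r LS4_2 L1.
Proof. apply ext_tr; auto. intros a s b [H| ->]. apply cS4; auto. apply tr2; auto. Qed.

Lemma cS43 r L1 (HL : NML L1) (HT : forall a, L1 (Imp (Box a) a))
  (H4 : forall a, L1 (Imp (Box a) (Box (Box a))))
  (H3 : forall a c, L1 (Or (Box (Imp (Box a) c)) (Box (Imp (Box c) a)))) : trc r LS4_3 L1.
Proof. apply ext_tr; auto. intros a s b [H| ->]. apply cS4; auto. apply tr3; auto. Qed.

Lemma iT a : LT (Imp (Box a) a).
Proof. exact (ext_Subst _ (fun _ => a) _ (ext_hyp _ _ (or_intror eq_refl))). Qed.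
Lemma i4 a : LS4 (Imp (Box a) (Box (Box a))).
Proof. exact (ext_Subst _ (fun _ => a) _ (ext_hyp _ _ (or_intror eq_refl))). Qed.
Lemma iB_KTB a : LKTB (Imp a (Box (Dia a))).
Proof. exact (ext_Subst _ (fun _ => a) _ (ext_hyp _ _ (or_intror eq_refl))). Qed.
Lemma iB_S5 a : LS5 (Imp a (Box (Dia a))).
Proof. exact (ext_Subst _ (fun _ => a) _ (ext_hyp _ _ (or_intror eq_refl))). Qed.
Lemma i2 a : LS4_2 (Imp (Dia (Box a)) (Box (Dia a))).
Proof. exact (ext_Subst _ (fun _ => a) _ (ext_hyp _ _ (or_intror eq_refl))). Qed.
Lemma i3 a c : LS4_3 (Or (Box (Imp (Box a) c)) (Box (Imp (Box c) a))).
Proof. exact (ext_Subst _ (fun n => match n with 0 => a | _ => c end) _ (ext_hyp _ _ (or_intror eq_refl))). Qed.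

Definition good L0 := NML L0 /\ (forall a, L0 (Imp (Box a) a)) /\ forall r, trc r L0 L0.

Lemma good_T : good LT.
Proof. split; [apply NML_Ext|split; [apply iT|]]. intro r. apply cT; [apply NML_Ext|apply iT]. Qed.

Lemma good_KTB : good LKTB.
Proof.
  assert (HT : forall a, LKTB (Imp (Box a) a)) by (intro a; apply ext_hyp; left; apply iT).
  split; [apply NML_Ext|split; [exact HT|]]. intro r. apply cKTB; [apply NML_Ext|exact HT|apply iB_KTB].
Qed.

Lemma good_S4 : good LS4.
Proof.
  assert (HT : forall a, LS4 (Imp (Box a) a)) by (intro a; apply ext_hyp; left; apply iT).
  split; [apply NML_Ext|split; [exact HT|]]. intro r. apply cS4; [apply NML_Ext|exact HT|apply i4].
Qed.

Lemma good_S5 : good LS5.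
Proof.
  assert (HT : forall a, LS5 (Imp (Box a) a)) by (intro a; apply ext_hyp; left; apply ext_hyp; left; apply iT).
  assert (H4 : forall a, LS5 (Imp (Box a) (Box (Box a)))) by (intro a; apply ext_hyp; left; apply i4).
  split; [apply NML_Ext|split; [exact HT|]]. intro r. apply cS5; [apply NML_Ext|exact HT|exact H4|apply iB_S5].
Qed.

Lemma good_S42 : good LS4_2.
Proof.
  assert (HT : forall a, LS4_2 (Imp (Box a) a)) by (intro a; apply ext_hyp; left; apply ext_hyp; left; apply iT).
  assert (H4 : forall a, LS4_2 (Imp (Box a) (Box (Box a)))) by (intro a; apply ext_hyp; left; apply i4).
  split; [apply NML_Ext|split; [exact HT|]]. intro r. apply cS42; [apply NML_Ext|exact HT|exact H4|apply i2].
Qed.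

Lemma good_S43 : good LS4_3.
Proof.
  assert (HT : forall a, LS4_3 (Imp (Box a) a)) by (intro a; apply ext_hyp; left; apply ext_hyp; left; apply iT).
  assert (H4 : forall a, LS4_3 (Imp (Box a) (Box (Box a)))) by (intro a; apply ext_hyp; left; apply i4).
  split; [apply NML_Ext|split; [exact HT|]]. intro r. apply cS43; [apply NML_Ext|exact HT|exact H4|apply i3].
Qed.

Fixpoint rfree r a : Prop := match a with
 | Var n => n <> r | Bot => True | Neg x => rfree r x
 | And x y | Or x y | Imp x y => rfree r x /\ rfree r y | Box x => rfree r x end.

Fixpoint maxv a := match a with
 | Var n => n | Bot => 0 | Neg x => maxv x
 | And x y | Or x y | Imp x y => max (maxv x) (maxv y) | Box x => maxv x end.

Lemma rfree_max a : forall r, maxv a < r -> rfree r a.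
Proof. induction a; simpl; intros r H; try split; try lia; auto;
  (apply IHa1 || apply IHa2); lia. Qed.

Lemma rfree_subs r a : rfree r a -> forall g, In g (subs a) -> rfree r g.
Proof.
  induction a; simpl; intros H g Hg; destruct Hg as [<-|Hg]; simpl; auto; try tauto;
  try (apply in_app_or in Hg; destruct Hg; [apply IHa1|apply IHa2]; tauto).
Qed.

Lemma tr_rfree r a : rfree r a -> tr r true a = tr r false a.
Proof.
  induction a; simpl; intros H; try reflexivity; try (f_equal; tauto).
  apply Nat.eqb_neq in H. rewrite H. reflexivity.
Qed.

Lemma tr_equiv L (HL : NML L) r a : rfree r a -> forall b, L (Imp (tr r b a) a) /\ L (Imp a (tr r b a)).
Proof.
  induction a; simpl; intros H b.
  - apply Nat.eqb_neq in H. rewrite H. split; apply nml_taut; auto; taut.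
  - split; apply nml_taut; auto; taut.
  - destruct (IHa H b) as [h1 h2]. split.
    + eapply mpt; [exact HL|exact h2|]. taut.
    + eapply mpt; [exact HL|exact h1|]. taut.
  - destruct H as [H1 H2]. destruct (IHa1 H1 b) as [h1 h2]. destruct (IHa2 H2 b) as [h3 h4].
    pose proof (andI _ HL _ _ h1 (andI _ HL _ _ h2 (andI _ HL _ _ h3 h4))) as hc.
    split; (eapply mpt; [exact HL|exact hc|]); taut.
  - destruct H as [H1 H2]. destruct (IHa1 H1 b) as [h1 h2]. destruct (IHa2 H2 b) as [h3 h4].
    pose proof (andI _ HL _ _ h1 (andI _ HL _ _ h2 (andI _ HL _ _ h3 h4))) as hc.
    split; (eapply mpt; [exact HL|exact hc|]); taut.
  - destruct H as [H1 H2]. destruct (IHa1 H1 b) as [h1 h2]. destruct (IHa2 H2 b) as [h3 h4].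
    pose proof (andI _ HL _ _ h1 (andI _ HL _ _ h2 (andI _ HL _ _ h3 h4))) as hc.
    split; (eapply mpt; [exact HL|exact hc|]); taut.
  - destruct (IHa H true) as [h1 h2]. destruct (IHa H false) as [h3 h4].
    pose proof (andI _ HL _ _ h1 (andI _ HL _ _ h2 (andI _ HL _ _ h3 h4))) as hc.
    split; apply mono; auto; (eapply mpt; [exact HL|exact hc|]); taut.
Qed.

Lemma tr_th L0 (HL : NML L0) (HT : forall a, L0 (Imp (Box a) a)) r g b :
  rfree r g -> L0 (tr r b (th r g)).
Proof.
  intro H. unfold th. simpl. rewrite Nat.eqb_refl.
  assert (Hb : tr r false g = tr r true g) by (symmetry; apply tr_rfree; auto).
  rewrite Hb. set (g' := tr r true g).
  assert (hX : L0 (Imp (Box (And (Neg (And (Neg Top) (Neg g'))) (Neg (And (Neg Bot) (Neg g'))))) (Box g'))) by (apply mono; auto; apply nml_taut; auto; taut).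
  assert (hY : L0 (Imp (Box (And (Neg (And Top (Neg g'))) (Neg (And Bot (Neg g'))))) (Box g'))) by (apply mono; auto; apply nml_taut; auto; taut).
  pose proof (andI _ HL _ _ (HT g') (andI _ HL _ _ hX hY)) as hc.
  destruct b; rewrite ?Hb; fold g'; (eapply mpt; [exact HL|exact hc|]); taut.
Qed.

Lemma tr_Theta L0 (HL : NML L0) (HT : forall a, L0 (Imp (Box a) a)) r Sl b :
  (forall g, In g Sl -> rfree r g) -> L0 (tr r b (Theta r Sl)).
Proof.
  induction Sl as [|g Sl IH]; intros H.
  - simpl. apply nml_taut; auto; taut.
  - change (L0 (And (tr r b (th r g)) (tr r b (Theta r Sl)))).
    apply andI; auto.
    + apply tr_th; auto. apply H; left; auto.
    + apply IH. intros; apply H; right; auto.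
Qed.

Lemma tr_boxn L0 (HL : NML L0) r x : (forall b, L0 (tr r b x)) -> forall n b, L0 (tr r b (boxn n x)).
Proof.
  intros H n. induction n; simpl; intro b; auto.
  apply nml_Nec; auto. apply andI; auto.
Qed.

Lemma good_sb L0 : good L0 -> strong_boxdot L0.
Proof.
  intros [HL0 [HT Htr]] L HL Hsub phi Hphi.
  set (r := S (maxv phi)).
  assert (Hr : rfree r phi) by (apply rfree_max; unfold r; lia).
  set (Sl := subs phi).
  set (alpha := Imp (boxn (md phi) (Theta r Sl)) phi).
  assert (H1 : BD L alpha).
  { unfold BD, alpha. simpl.
    pose proof (bd_equiv L HL r Sl phi (incl_refl _) (md phi) (le_n _)) as h.
    pose proof (andI _ HL _ _ h Hphi) as hc. eapply mpt; [exact HL|exact hc|]. taut. }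
  pose proof (Hsub _ H1) as H2.
  pose proof (Htr r alpha Var true H2) as H3. rewrite subst_id in H3.
  unfold alpha in H3. simpl in H3.
  assert (H4 : L0 (tr r true (boxn (md phi) (Theta r Sl)))).
  { apply tr_boxn; auto. intro b. apply tr_Theta; auto. intros g Hg. eapply rfree_subs; eauto. }
  pose proof (nml_MP _ HL0 _ _ H4 H3) as H5.
  destruct (tr_equiv L0 HL0 r phi Hr true) as [H6 _].
  exact (nml_MP _ HL0 _ _ H5 H6).
Qed.

Theorem mainTheorem2 :
  (strong_boxdot LT /\ strong_boxdot LKTB /\ strong_boxdot LS4 /\
   strong_boxdot LS5 /\ strong_boxdot LS4_2 /\ strong_boxdot LS4_3) /\
  (forall L : logic, NML L ->
     (forall a, BD L a <-> LT a) -> subset L LT).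
Proof.
  split.
  - repeat split; apply good_sb; first [apply good_T|apply good_KTB|apply good_S4|apply good_S5|apply good_S42|apply good_S43].
  - intros L HL H. apply (good_sb _ good_T L HL). intros a Ha. apply H; auto.
Qed.
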